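(* In an $L$-user functional decode-and-forward multi-way relay network with lattice codes, under the equal average channel gain scenario, the average sum rate of the proposed pairing scheme equals that of pairing scheme A and that of pairing scheme B.
   Context: Setting: $L$ users exchange messages via a single relay (no direct links, half-duplex); one time frame has a multiple access phase and a broadcast phase, each of $L-1$ slots; in each multiple-access slot a pair of users transmits dithered lattice codewords simultaneously, the relay decodes the modulo-lattice sum of their lattice points (functional decode-and-forward) and broadcasts it in the corresponding broadcast slot; users recover all messages using their own. User power $P$, relay power $P_r$, AWGN power $N_0$; $h_{j,r}$ is the zero-mean complex Gaussian (block Rayleigh) channel between user $j$ and the relay (reciprocal), with variance $\sigma^2_{h_{j,r}}$. Pairing schemes: proposed: the common user $i$ is the user with largest average channel gain, and every other user pairs with $i$ in its own slot; scheme A: in slot $t\in[1,L-1]$ users $t$ and $t+1$ pair; scheme B: in slot $t$, users $t$ and $L-t+1$ pair if $1\le t\le\lfloor L/2\rfloor$, and users $t+1$ and $L-t+1$ pair if $\lfloor L/2\rfloor<t\le L-1$. Equal average channel gain scenario: all $\sigma^2_{h_{j,r}}$ equal and fixed over all frames (the proposed scheme's common user is chosen at random each frame). Sum rate: for a scheme in which slot $t$ pairs users $a_t,b_t$, $R_s=\frac{1}{2(L-1)}\sum_{t}\left(\log\left(\frac{|h_{a_t,r}|^2}{|h_{a_t,r}|^2+|h_{b_t,r}|^2}+\frac{P|h_{a_t,r}|^2}{N_0}\right)+\log\left(\frac{|h_{b_t,r}|^2}{|h_{a_t,r}|^2+|h_{b_t,r}|^2}+\frac{P|h_{b_t,r}|^2}{N_0}\right)\right)$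 ($\log$ base 2); the average sum rate is its expectation over channel realizations. *)

(* Defs.v *)
From HB Require Import structures.
From mathcomp Require Import all_boot all_order all_algebra.
From mathcomp Require Import all_classical all_reals all_analysis.
From mathcomp Require Import normal_distribution.
Set Implicit Arguments. Unset Strict Implicit. Unset Printing Implicit Defensive.
Import Order.TTheory GRing.Theory Num.Theory.
Local Open Scope classical_set_scope.
Local Open Scope ring_scope.

(* Users are numbered 1..L.  The channel h_{j,r} = X (j,false) + i X (j,true):
   real part X (j,false), imaginary part X (j,true). *)

Definition mutually_independent d (T : measurableType d) (R : realType)
    (P : probability T R) (I : eqType) (s : seq I) (X : I -> {RV P >-> R}) :=
  forall (J : seq I), {subset J <= s} -> uniq J ->
  forall (B : I -> set R), (forall i, measurable (B i)) ->
    fine (P (\bigcap_(i in [set` J]) (X i @^-1` B i))) =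
    \prod_(i <- J) fine (P (X i @^-1` B i)).

Definition centered_gaussian d (T : measurableType d) (R : realType)
    (P : probability T R) (X : {RV P >-> R}) (v : R) :=
  forall B : set R, measurable B ->
    P (X @^-1` B) = normal_prob 0 (Num.sqrt v) B.

Definition channel_indices (L : nat) : seq (nat * bool) :=
  [seq (j, b) | j <- iota 1 L, b <- [:: false; true]].

(* Equal average channel gain scenario with block Rayleigh fading:
   h_{j,r}, j = 1..L, independent zero-mean circularly-symmetric complex
   Gaussian with common variance sigma2, i.e. real and imaginary parts are
   mutually independent N(0, sigma2/2). *)
Definition equal_gain_rayleigh d (T : measurableType d) (R : realType)
    (P : probability T R) (L : nat) (X : nat * bool -> {RV P >-> R})
    (sigma2 : R) :=
  mutually_independent (channel_indices L) X /\
  forall j b, (1 <= j <= L)%N -> centered_gaussian (X (j, b)) (sigma2 / 2).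

Definition gain d (T : measurableType d) (R : realType) (P : probability T R)
    (X : nat * bool -> {RV P >-> R}) (j : nat) (w : T) : R :=
  X (j, false) w ^+ 2 + X (j, true) w ^+ 2.

Definition log2 (R : realType) (x : R) : R := ln x / ln 2.

Definition pair_rate (R : realType) (Pw N0 ga gb : R) : R :=
  log2 (ga / (ga + gb) + Pw * ga / N0) + log2 (gb / (ga + gb) + Pw * gb / N0).

Definition sum_rate (R : realType) (L : nat) (Pw N0 : R) (g : nat -> R)
    (pairs : seq (nat * nat)) : R :=
  (2 * (L%:R - 1))^-1 * \sum_(p <- pairs) pair_rate Pw N0 (g p.1) (g p.2).

Definition pairs_proposed (L i : nat) : seq (nat * nat) :=
  [seq (i, j) | j <- iota 1 L & j != i].

Definition pairs_A (L : nat) : seq (nat * nat) :=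
  [seq (t, t.+1) | t <- iota 1 (L - 1)].

Definition pairs_B (L : nat) : seq (nat * nat) :=
  [seq (if (t <= L./2)%N then (t, L - t + 1)%N else (t.+1, L - t + 1)%N)
  | t <- iota 1 (L - 1)].

Definition avg_sum_rate d (T : measurableType d) (R : realType)
    (P : probability T R) (X : nat * bool -> {RV P >-> R}) (L : nat)
    (Pw N0 : R) (pairs : seq (nat * nat)) : \bar R :=
  (\int[P]_w (sum_rate L Pw N0 (fun j => gain X j w) pairs)%:E)%E.

(* average sum rate of the proposed scheme when the common user is drawn
   uniformly at random from {1..L}, independently of the channels *)
Definition avg_sum_rate_proposed d (T : measurableType d) (R : realType)
    (P : probability T R) (X : nat * bool -> {RV P >-> R}) (L : nat)
    (Pw N0 : R) : \bar R :=
  ((L%:R^-1)%:E * \sum_(1 <= i < L.+1) avg_sum_rate X L Pw N0 (pairs_proposed L i))%E.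

(* Main.v *)
Require Import Defs.
From HB Require Import structures.
From mathcomp Require Import all_boot all_order all_algebra.
From mathcomp Require Import all_classical all_reals all_analysis.
From mathcomp Require Import normal_distribution measurable_realfun.
From mathcomp Require Import ring lra.
Import Order.TTheory GRing.Theory Num.Theory.
Local Open Scope classical_set_scope.
Local Open Scope ring_scope.
Set Implicit Arguments. Unset Strict Implicit. Unset Printing Implicit Defensive.
Section gen.
Context d1 d2 d3 d4 (T1 : measurableType d1) (T2 : measurableType d2)
  (T3 : measurableType d3) (T4 : measurableType d4).

Definition G4 : set (set ((T1 * T2) * (T3 * T4))%type) :=
  fun E => exists A1 A2 A3 A4, [/\ measurable A1, measurable A2, measurable A3,
     measurable A4 & E = (A1 `*` A2) `*` (A3 `*` A4)].



Lemma measurable4E : @measurable _ ((T1 * T2) * (T3 * T4))%type = <<s G4 >>.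
Proof.
rewrite eqEsubset; split; last first.
  apply: smallest_sub.
    exact: sigma_algebra_measurable.
  by move=> _ [A1 [A2 [A3 [A4 [m1 m2 m3 m4 ->]]]]]; apply: measurableX; apply: measurableX.
rewrite measurable_prod_measurableType.
have sG := @smallest_sigma_algebra _ setT G4.
apply: smallest_sub => //.
have hl : forall A : set (T1 * T2), measurable A -> <<s G4 >> (A `*` setT).
  pose S := fun A : set (T1 * T2) => <<s G4 >> (A `*` [set: T3 * T4]).
  suff : measurable `<=` S by move=> h A /h.
  rewrite measurable_prod_measurableType.
  apply: smallest_sub.
    case: sG => s0 sC sU; split.
    - by rewrite /S set0X.
    - move=> A; rewrite /S => SA.
      have -> : (setT `\` A) `*` [set: T3 * T4] = setT `\` (A `*` setT).
        by apply/seteqP; split => -[x y] /=; rewrite /setX/setD/=; tauto.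
      exact: sC.
    - move=> F SF; rewrite /S.
      have -> : (\bigcup_k F k) `*` [set: T3 * T4] = \bigcup_k (F k `*` setT).
        apply/seteqP; split => -[x y] /=.
          by move=> [[k _ Fk] _]; exists k.
        by move=> [k _ [Fk _]]; split => //; exists k.
      exact: sU.
  move=> _ [A1 mA1 [A2 mA2 <-]].
  apply: sub_sigma_algebra; exists A1, A2, setT, setT; split => //.
  by rewrite setXTT.
have hr : forall B : set (T3 * T4), measurable B -> <<s G4 >> (setT `*` B).
  pose S := fun B : set (T3 * T4) => <<s G4 >> ([set: T1 * T2] `*` B).
  suff : measurable `<=` S by move=> h A /h.
  rewrite measurable_prod_measurableType.
  apply: smallest_sub.
    case: sG => s0 sC sU; split.
    - by rewrite /S setX0.
    - move=> A; rewrite /S => SA.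
      have -> : [set: T1 * T2] `*` (setT `\` A) = setT `\` (setT `*` A).
        by apply/seteqP; split => -[x y] /=; rewrite /setX/setD/=; tauto.
      exact: sC.
    - move=> F SF; rewrite /S.
      have -> : [set: T1 * T2] `*` (\bigcup_k F k) = \bigcup_k (setT `*` F k).
        apply/seteqP; split => -[x y] /=.
          by move=> [_ [k _ Fk]]; exists k.
        by move=> [k _ [_ Fk]]; split => //; exists k.
      exact: sU.
  move=> _ [A1 mA1 [A2 mA2 <-]].
  apply: sub_sigma_algebra; exists setT, setT, A1, A2; split => //.
  by rewrite setXTT.
move=> _ [A mA [B mB <-]].
have -> : A `*` B = (A `*` setT) `&` (setT `*` B).
  by apply/seteqP; split => -[x y] /=; rewrite /setX/setI/=; tauto.
have := (sigma_algebraP (fun X _ => @subsetT _ X)).1 sG.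
by case=> _ _ _; apply; [exact: hl|exact: hr].
Qed.
End gen.
Section law.
Context (d : measure_display) (T : measurableType d) (R : realType)
  (P : probability T R) (L : nat) (X : nat * bool -> {RV P >-> R}) (sigma2 : R).

Definition Yv (a b : nat) : T -> ((R * R) * (R * R))%type :=
  fun w => ((X (a, false) w, X (a, true) w), (X (b, false) w, X (b, true) w)).

Lemma mYv a b : measurable_fun setT (Yv a b).
Proof.
by apply: measurable_fun_pair; apply: measurable_fun_pair; exact: measurable_funPT.
Qed.

Lemma mem_chan j b : (1 <= j <= L)%N -> (j, b) \in channel_indices L.
Proof.
move=> jL; rewrite /channel_indices; apply/allpairsP; exists (j, b) => /=.
split => //; last by case: b.
by rewrite mem_iota; move: jL => /andP[-> /=]; rewrite add1n ltnS.
Qed.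

Hypothesis HG : equal_gain_rayleigh L X sigma2.

Definition nprod (A1 A2 A3 A4 : set R) : R :=
  \prod_(A <- [:: A1; A2; A3; A4]) fine (normal_prob 0 (Num.sqrt (sigma2 / 2)) A).

Lemma law_rect a b (A1 A2 A3 A4 : set R) : a != b ->
  (1 <= a <= L)%N -> (1 <= b <= L)%N ->
  measurable A1 -> measurable A2 -> measurable A3 -> measurable A4 ->
  P (Yv a b @^-1` ((A1 `*` A2) `*` (A3 `*` A4))) = (nprod A1 A2 A3 A4)%:E.
Proof.
move=> ab aL bL m1 m2 m3 m4.
case: HG => HI HN.
pose J := [:: (a, false); (a, true); (b, false); (b, true)].
pose B i := if i == (a, false) then A1 else if i == (a, true) then A2 else
  if i == (b, false) then A3 else if i == (b, true) then A4 else setT.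
have mB i : measurable (B i).
  by rewrite /B; repeat case: ifP => _ //.
have B1 : B (a, false) = A1 by rewrite /B eqxx.
have B2 : B (a, true) = A2 by rewrite /B !xpair_eqE /= eqxx.
have B3 : B (b, false) = A3.
  rewrite /B !xpair_eqE /= !eqxx /=.
  case: (b =P a) => [ba|_ //]; by move: ab; rewrite ba eqxx.
have B4 : B (b, true) = A4.
  rewrite /B !xpair_eqE /= !eqxx /=.
  case: (b =P a) => [ba|_ //]; by move: ab; rewrite ba eqxx.
have sJ : {subset J <= channel_indices L}.
  by move=> i; rewrite !inE => /or4P[] /eqP ->; apply: mem_chan.
have uJ : uniq J.
  rewrite /= !inE !xpair_eqE !eqxx /=.
  by move: ab; case: eqP.
have := HI J sJ uJ B mB.
have -> : \bigcap_(i in [set` J]) (X i @^-1` B i) =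
          Yv a b @^-1` ((A1 `*` A2) `*` (A3 `*` A4)).
  apply/seteqP; split => w /=.
    move=> h; have h1 := h (a, false); have h2 := h (a, true);
    have h3 := h (b, false); have h4 := h (b, true).
    rewrite B1 B2 B3 B4 in h1 h2 h3 h4.
    by split; split; [apply: h1|apply: h2|apply: h3|apply: h4];
      rewrite /= !inE eqxx ?orbT.
  move=> [[h1 h2] [h3 h4]] i; rewrite /= !inE => /or4P[] /eqP ->;
    by rewrite ?B1 ?B2 ?B3 ?B4.
rewrite /J !big_cons big_nil B1 B2 B3 B4.
move=> hf.
rewrite -[LHS]fineK; last first.
  apply: fin_num_measure; rewrite -[X in measurable X]setTI; apply: (mYv a b) => //.
  by apply: measurableX; apply: measurableX.
congr (_%:E); rewrite hf /nprod !big_cons big_nil.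
by rewrite !HN.
Qed.

End law.

Section transfer.
Context (d : measure_display) (T : measurableType d) (R : realType)
  (P : probability T R) (L : nat) (X : nat * bool -> {RV P >-> R}) (sigma2 : R).
Hypothesis HG : equal_gain_rayleigh L X sigma2.

Local Notation Y := (Yv X).

Lemma integral_transfer a b a' b' (h : ((R * R) * (R * R))%type -> \bar R) :
  a != b -> (1 <= a <= L)%N -> (1 <= b <= L)%N ->
  a' != b' -> (1 <= a' <= L)%N -> (1 <= b' <= L)%N ->
  measurable_fun [set: ((R * R) * (R * R))%type] h -> (forall y, (0 <= h y)%E) ->
  (\int[P]_w h (Y a b w) = \int[P]_w h (Y a' b' w))%E.
Proof.
move=> ab aL bL ab' aL' bL' mh h0.
pose Ym a b : {mfun T >-> ((R * R) * (R * R))%type} :=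
  HB.pack (Y a b) (isMeasurableFun.Build _ _ _ _ _ (mYv X a b)).
have E1 a1 b1 : (\int[P]_w h (Y a1 b1 w) =
    \int[distribution P (Ym a1 b1)]_(y in setT) h y)%E.
  by rewrite [RHS](ge0_integral_pushforward (mYv X a1 b1)) //=.
rewrite E1 E1.
apply: eq_measure_integral => A mA _.
have := measure_unique (@G4 _ _ _ _ R R R R) (fun _ => setT) (@measurable4E _ _ _ _ R R R R).
move=> /(_ _ _ _ _ (distribution P (Ym a b)) (distribution P (Ym a' b'))).
apply => //.
- move=> _ _ [A1 [A2 [A3 [A4 [m1 m2 m3 m4 ->]]]]] [B1 [B2 [B3 [B4 [n1 n2 n3 n4 ->]]]]].
  exists (A1 `&` B1), (A2 `&` B2), (A3 `&` B3), (A4 `&` B4); split;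
    try exact: measurableI.
  by rewrite -!setXI.
- by move=> _; exists setT, setT, setT, setT; split => //; rewrite !setXTT.
- by rewrite bigcup_const.
- move=> _ [A1 [A2 [A3 [A4 [m1 m2 m3 m4 ->]]]]].
  rewrite /distribution /pushforward.
  change (P (Y a b @^-1` ((A1 `*` A2) `*` (A3 `*` A4))) =
          P (Y a' b' @^-1` ((A1 `*` A2) `*` (A3 `*` A4)))).
  by rewrite (law_rect HG) // (law_rect HG).
- move=> _; rewrite /distribution /pushforward.
  change ((P (Y a b @^-1` setT)) < +oo)%E.
  by rewrite preimage_setT probability_setT ltry.
Qed.

End transfer.

Section normal_facts.
Context (R : realType).
Local Notation mu := (@lebesgue_measure R).

Lemma normal_change (s : R) (f : R -> \bar R) :
  (forall x, (0 <= f x)%E) -> measurable_fun setT f ->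
  (\int[normal_prob 0 s]_x f x = \int[mu]_x (f x * (normal_pdf 0 s x)%:E))%E.
Proof.
move=> f0 mf.
have numu := @normal_prob_dominates R 0 s.
rewrite -(Radon_Nikodym_SigmaFinite.change_of_variables numu) //.
apply: ae_eq_integral => //.
- apply: emeasurable_funM => //.
  exact: measurable_int (Radon_Nikodym_SigmaFinite.f_integrable numu).
- apply: emeasurable_funM => //.
  by apply/measurable_EFinP; exact: measurable_normal_pdf.
- apply: ae_eqe_mul2l.
  apply: integral_ae_eq => //.
  + exact: Radon_Nikodym_SigmaFinite.f_integrable.
  + by apply/measurable_EFinP; exact: measurable_normal_pdf.
  + move=> E _ mE.
    by rewrite -Radon_Nikodym_SigmaFinite.f_integral.
Qed.

End normal_facts.

Section moment.
Context (R : realType).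
Local Notation mu := (@lebesgue_measure R).

Lemma normal_pt_bound (s x : R) : s != 0 ->
  x ^+ 2 * normal_pdf 0 s x <=
  (s ^+ 2 *+ 8 * normal_peak s / normal_peak (s *+ 2)) * normal_pdf 0 (s *+ 2) x.
Proof.
move=> s0.
have s20 : s *+ 2 != 0 by rewrite mulrn_eq0 negb_or s0.
rewrite !normal_pdfE //= /normal_fun.
set ps := normal_peak s; set p2 := normal_peak (s *+ 2).
have ps0 : 0 < ps by exact: normal_peak_gt0.
have p20 : 0 < p2 by exact: normal_peak_gt0.
set t := x ^+ 2 / (s ^+ 2 *+ 8).
have t0 : 0 <= t by rewrite /t divr_ge0 ?sqr_ge0 // (mulrn_wge0 _ (sqr_ge0 s)).
set E1 := expR (- (x - 0) ^+ 2 / ((s *+ 2) ^+ 2 *+ 2)).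
set E3 := expR (- (3 * t)).
have e3 : t * E3 <= 1.
  rewrite /E3 expRN -/(t / _) ler_pdivrMr ?expR_gt0 // mul1r.
  apply: le_trans (expR_ge1Dx _); lra.
have sp : expR (- (x - 0) ^+ 2 / (s ^+ 2 *+ 2)) = E1 * E3.
  by rewrite /E1 /E3 -expRD; congr expR; rewrite /t; field.
rewrite sp.
have E10 : 0 <= E1 by exact: expR_ge0.
have -> : s ^+ 2 *+ 8 * ps / p2 * (p2 * E1) = ps * E1 * (s ^+ 2 *+ 8).
  by field; rewrite gt_eqF.
have -> : x ^+ 2 * (ps * (E1 * E3)) = ps * E1 * ((s ^+ 2 *+ 8) * (t * E3)).
  by rewrite /t; field.
apply: ler_wpM2l; first by rewrite mulr_ge0 // ltW.
rewrite -[leRHS]mulr1; apply: ler_wpM2l => //.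
exact: (mulrn_wge0 _ (sqr_ge0 s)).
Qed.

Lemma normal_moment2 (s : R) : s != 0 ->
  (\int[normal_prob 0 s]_x ((x ^+ 2)%:E) < +oo)%E.
Proof.
move=> s0.
have s20 : s *+ 2 != 0 by rewrite mulrn_eq0 negb_or s0.
have mx2 : measurable_fun [set: R] (fun x : R => x ^+ 2).
  exact: measurable_funX.
rewrite normal_change //; last first.
- exact/measurable_EFinP.
- by move=> x; rewrite lee_fin sqr_ge0.
set K := s ^+ 2 *+ 8 * normal_peak s / normal_peak (s *+ 2).
apply: (@le_lt_trans _ _ (\int[mu]_x ((K * normal_pdf 0 (s *+ 2) x)%:E))%E).
  apply: ge0_le_integral => //.
  - move=> x _; rewrite -EFinM lee_fin mulr_ge0 ?sqr_ge0 //.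
    exact: normal_pdf_ge0.
  - apply: emeasurable_funM; first exact/measurable_EFinP.
    by apply/measurable_EFinP; exact: measurable_normal_pdf.
  - apply/measurable_EFinP; apply: measurable_funM => //.
    exact: measurable_normal_pdf.
  - move=> x _; rewrite -EFinM lee_fin.
    exact: normal_pt_bound.
under eq_integral do rewrite EFinM.
rewrite integralZl //; last exact: integrable_normal_pdf.
by rewrite integral_normal_pdf mule1 ltry.
Qed.

End moment.

Section intB.
Context d (T : measurableType d) (R : realType) (mu : {measure set T -> \bar R}).
Local Open Scope ereal_scope.

Lemma integralB_nonneg (G H : T -> R) :
  measurable_fun setT G -> measurable_fun setT H ->
  (forall x, (0 <= G x)%R) -> (forall x, (0 <= H x)%R) ->
  \int[mu]_x (G x)%:E < +oo ->
  \int[mu]_x ((G x - H x)%:E) = \int[mu]_x (G x)%:E - \int[mu]_x (H x)%:E.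
Proof.
move=> mG mH G0 H0 Gfin.
have iG : mu.-integrable setT (EFin \o G).
  apply/integrableP; split; first exact/measurable_EFinP.
  suff -> : \int[mu]_x `|(EFin \o G) x| = \int[mu]_x (G x)%:E by [].
  by apply: eq_integral => x _; rewrite /= ger0_norm.
have IG0 : 0 <= \int[mu]_x (G x)%:E by apply: integral_ge0 => x _; rewrite lee_fin.
have IGf : \int[mu]_x (G x)%:E \is a fin_num by rewrite ge0_fin_numE.
have [Hfin|Hinf] := ltP (\int[mu]_x (H x)%:E) +oo.
  have iH : mu.-integrable setT (EFin \o H).
    apply/integrableP; split; first exact/measurable_EFinP.
    suff -> : \int[mu]_x `|(EFin \o H) x| = \int[mu]_x (H x)%:E by [].
    by apply: eq_integral => x _; rewrite /= ger0_norm.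
  transitivity (\int[mu]_x ((G x)%:E - (H x)%:E)).
    by apply: eq_integral => x _; rewrite EFinB.
  exact: integralB_EFin.
have -> : \int[mu]_x (H x)%:E = +oo by apply/eqP; rewrite eq_le leey.
set f := fun x => (G x - H x)%:E.
have mf : measurable_fun setT f.
  by apply/measurable_EFinP; exact: measurable_funB.
have Ip : \int[mu]_x (f^\+ x) \is a fin_num.
  rewrite ge0_fin_numE; last by apply: integral_ge0 => x _; exact: funepos_ge0.
  apply: le_lt_trans Gfin; apply: ge0_le_integral => //.
  all: try (by move=> x _; exact: funepos_ge0).
  all: try exact: measurable_funepos.
  all: try exact/measurable_EFinP.
  move=> x _; rewrite funeposE /f /= ge_max; apply/andP; split.
      by rewrite lee_fin lerBlDr lerDl.
    by rewrite lee_fin.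
have Hle : \int[mu]_x (H x)%:E <= \int[mu]_x (G x)%:E + \int[mu]_x (f^\- x).
  apply: (@le_trans _ _ (\int[mu]_x ((G x)%:E + f^\- x))).
    apply: ge0_le_integral => //.
    all: try (by move=> x _; rewrite lee_fin).
    all: try exact/measurable_EFinP.
    all: try (apply: emeasurable_funD; [exact/measurable_EFinP|exact: measurable_funeneg]).
    move=> x _; rewrite funenegE /f /=.
    apply: (@le_trans _ _ ((G x)%:E + (- (G x - H x))%:E)).
      by rewrite -EFinD lee_fin opprB addrC subrK.
    by rewrite leeD2l // le_max lexx.
  rewrite ge0_integralD //.
  all: try (by move=> x _; rewrite lee_fin).
  all: try exact/measurable_EFinP.
  all: try (by move=> x _; exact: funeneg_ge0).
  all: try exact: measurable_funeneg.
have In : \int[mu]_x (f^\- x) = +oo.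
  have := le_trans Hinf Hle; rewrite leye_eq => /eqP.
  have : 0 <= \int[mu]_x (f^\- x).
    by apply: integral_ge0 => x _; exact: funeneg_ge0.
  case: (\int[mu]_x (f^\- x)) => // r _.
  by rewrite -(fineK IGf) -EFinD.
rewrite integralE In.
by rewrite -(fineK Ip) -(fineK IGf).
Qed.

End intB.

Lemma measurable_inv (R : realType) : measurable_fun [set: R] (@GRing.inv R).
Proof.
have -> : [set: R] = [set 0] `|` ~` [set 0] by rewrite setUCr.
apply/measurable_funU => //.
  by apply: measurableC.
split; first exact: measurable_fun_set1.
apply: open_continuous_measurable_fun.
  rewrite openC.
  apply: (accessible_finite_set_closed.1 _); last exact: finite_set1.
  exact: hausdorff_accessible.
move=> x; rewrite inE => x0; apply: inv_continuous.
by apply/eqP.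
Qed.

Section hdefs.
Context (R : realType) (Pw N0 : R).
Local Notation R4 := ((R * R) * (R * R))%type.

Definition hr (y : R4) : R :=
  pair_rate Pw N0 (y.1.1 ^+ 2 + y.1.2 ^+ 2) (y.2.1 ^+ 2 + y.2.2 ^+ 2).
Definition hp (y : R4) : R := Num.max (hr y) 0.
Definition hn (y : R4) : R := Num.max (- hr y) 0.

Lemma hrE y : hr y = hp y - hn y.
Proof.
rewrite /hp /hn /Num.max /Order.max; set z := hr y.
by have [h1|h1] := ltP z 0; have [h2|h2] := ltP (-z) 0; lra.
Qed.

Lemma hp_ge0 y : 0 <= hp y.
Proof. by rewrite /hp /Num.max /Order.max; have [h1|h1] := ltP (hr y) 0; lra. Qed.
Lemma hn_ge0 y : 0 <= hn y.
Proof. by rewrite /hn /Num.max /Order.max; have [h1|h1] := ltP (- hr y) 0; lra. Qed.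

Let mlog2 d (T : measurableType d) (f : T -> R) : measurable_fun setT f ->
  measurable_fun setT (fun x => log2 (f x)).
Proof.
move=> mf; rewrite /log2; apply: measurable_funM => //.
exact: measurableT_comp (@measurable_ln R) mf.
Qed.

Let mdiv d (T : measurableType d) (f g : T -> R) : measurable_fun setT f ->
  measurable_fun setT g -> measurable_fun setT (fun x => f x / g x).
Proof.
move=> mf mg; apply: measurable_funM => //.
exact: measurableT_comp (@measurable_inv R) mg.
Qed.

Lemma mhr : measurable_fun setT hr.
Proof.
have m11 : measurable_fun [set: R4] (fun y : R4 => y.1.1).
  exact: measurableT_comp measurable_fst measurable_fst.
have m12 : measurable_fun [set: R4] (fun y : R4 => y.1.2).
  exact: measurableT_comp measurable_snd measurable_fst.
have m21 : measurable_fun [set: R4] (fun y : R4 => y.2.1).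
  exact: measurableT_comp measurable_fst measurable_snd.
have m22 : measurable_fun [set: R4] (fun y : R4 => y.2.2).
  exact: measurableT_comp measurable_snd measurable_snd.
have ga : measurable_fun [set: R4] (fun y : R4 => y.1.1 ^+ 2 + y.1.2 ^+ 2).
  by apply: measurable_funD; apply: measurable_funX.
have gb : measurable_fun [set: R4] (fun y : R4 => y.2.1 ^+ 2 + y.2.2 ^+ 2).
  by apply: measurable_funD; apply: measurable_funX.
rewrite /hr /pair_rate; apply: measurable_funD; apply: mlog2;
  apply: measurable_funD; try (apply: mdiv => //; exact: measurable_funD);
  apply: mdiv => //; apply: measurable_funM => //.
Qed.

Lemma mhp : measurable_fun setT hp.
Proof. by apply: measurable_maxr => //; exact: mhr. Qed.

Lemma mhn : measurable_fun setT hn.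
Proof. by apply: measurable_maxr => //; apply: measurable_funN; exact: mhr. Qed.

End hdefs.

Section bounds.
Context (R : realType) (Pw N0 : R).
Hypotheses (Pw0 : 0 < Pw) (N00 : 0 < N0).

Lemma ln2_gt0 : 0 < ln (2 : R).
Proof. by apply: ln_gt0; rewrite ltr1n. Qed.

Lemma log2_le (u c : R) : 0 <= c -> u <= 1 + c -> log2 u <= c / ln 2.
Proof.
move=> c0 uc; rewrite /log2 ler_pM2r ?invr_gt0 ?ln2_gt0 //.
have [u1|u1] := leP u 1.
  by apply: le_trans (ln_le0 u1) c0.
have -> : u = 1 + (u - 1) by rewrite addrC subrK.
apply: le_trans (le_ln1Dx _) _; lra.
Qed.

Lemma frac_le1 (ga gb : R) : 0 <= ga -> 0 <= gb -> ga / (ga + gb) <= 1.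
Proof.
move=> ga0 gb0; have [->|s0] := eqVneq (ga + gb) 0.
  by rewrite invr0 mulr0 ler01.
have sp : 0 < ga + gb by rewrite lt_neqAle eq_sym s0 addr_ge0.
by rewrite ler_pdivrMr // mul1r lerDl.
Qed.

Lemma pair_rate_le (ga gb : R) : 0 <= ga -> 0 <= gb ->
  pair_rate Pw N0 ga gb <= (Pw / N0 / ln 2) * (ga + gb).
Proof.
move=> ga0 gb0; rewrite /pair_rate.
have k0 : 0 <= Pw / N0 by rewrite divr_ge0 // ltW.
have h1 : log2 (ga / (ga + gb) + Pw * ga / N0) <= (Pw * ga / N0) / ln 2.
  apply: log2_le; first by rewrite -mulrA mulr_ge0 ?divr_ge0 // ltW.
  by rewrite lerD2r frac_le1.
have h2 : log2 (gb / (ga + gb) + Pw * gb / N0) <= (Pw * gb / N0) / ln 2.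
  apply: log2_le; first by rewrite -mulrA mulr_ge0 ?divr_ge0 // ltW.
  by rewrite lerD2r (addrC ga) frac_le1.
apply: le_trans (lerD h1 h2) _.
by rewrite le_eqVlt; apply/orP; left; apply/eqP; field;
  rewrite ?gt_eqF ?ln2_gt0.
Qed.

Lemma hp_le (y : ((R * R) * (R * R))%type) :
  hp Pw N0 y <= (Pw / N0 / ln 2) *
    (y.1.1 ^+ 2 + y.1.2 ^+ 2 + (y.2.1 ^+ 2 + y.2.2 ^+ 2)).
Proof.
have C0 : 0 <= Pw / N0 / ln 2 by rewrite !divr_ge0 ?ltW ?ln2_gt0.
have g0 : 0 <= y.1.1 ^+ 2 + y.1.2 ^+ 2 by rewrite addr_ge0 ?sqr_ge0.
have g1 : 0 <= y.2.1 ^+ 2 + y.2.2 ^+ 2 by rewrite addr_ge0 ?sqr_ge0.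
have := pair_rate_le g0 g1; rewrite -/(hr Pw N0 y) => hle.
have r0 : 0 <= (Pw / N0 / ln 2) * (y.1.1 ^+ 2 + y.1.2 ^+ 2 + (y.2.1 ^+ 2 + y.2.2 ^+ 2)).
  by rewrite mulr_ge0 // addr_ge0.
rewrite /hp /Num.max /Order.max; by case: ltP.
Qed.

End bounds.

Section main.
Context (d : measure_display) (T : measurableType d) (R : realType)
  (P : probability T R) (L : nat) (X : nat * bool -> {RV P >-> R})
  (Pw N0 sigma2 : R).
Hypothesis HG : equal_gain_rayleigh L X sigma2.
Hypotheses (Pw0 : 0 < Pw) (N00 : 0 < N0) (s0 : 0 < sigma2).
Local Open Scope ereal_scope.

Lemma rv_moment2 j b : (1 <= j <= L)%N ->
  \int[P]_w ((X (j, b) w ^+ 2)%R)%:E < +oo.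
Proof.
move=> jL; case: HG => _ HN; have Hg := HN j b jL.
have sv : Num.sqrt (sigma2 / 2) != 0%R.
  by rewrite gt_eqF // sqrtr_gt0 divr_gt0.
have mX : measurable_fun [set: T] (X (j, b) : T -> measurableTypeR R).
  exact: (measurable_funPT (X (j, b))).
pose Xm : {mfun T >-> measurableTypeR R} :=
  HB.pack (X (j, b) : T -> measurableTypeR R) (isMeasurableFun.Build _ _ _ _ _ mX).
have -> : \int[P]_w ((X (j, b) w ^+ 2)%R)%:E =
    \int[distribution P Xm]_(y in setT) ((y ^+ 2)%R)%:E.
  rewrite [RHS](ge0_integral_pushforward mX) //=.
  - by apply/measurable_EFinP; exact: measurable_funX.
  - by move=> y _; rewrite lee_fin sqr_ge0.
have -> : \int[distribution P Xm]_y ((y ^+ 2)%R)%:E =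
    \int[normal_prob 0 (Num.sqrt (sigma2 / 2))]_y ((y ^+ 2)%R)%:E.
  by apply: eq_measure_integral => A mA _; exact: Hg.
exact: normal_moment2.
Qed.


Lemma mhpY a b : measurable_fun [set: T] (fun w => hp Pw N0 (Yv X a b w)).
Proof. exact: measurableT_comp (mhp Pw N0) (mYv X a b). Qed.

Lemma mhnY a b : measurable_fun [set: T] (fun w => hn Pw N0 (Yv X a b w)).
Proof. exact: measurableT_comp (mhn Pw N0) (mYv X a b). Qed.

Lemma hp_fin a b : (1 <= a <= L)%N -> (1 <= b <= L)%N ->
  \int[P]_w (hp Pw N0 (Yv X a b w))%:E < +oo.
Proof.
move=> aL bL.
set C := (Pw / N0 / ln 2)%R.
have C0 : (0 <= C)%R by rewrite !divr_ge0 ?ltW ?ln2_gt0.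
pose J := [:: (a, false); (a, true); (b, false); (b, true)].
have mJ : forall i, measurable_fun [set: T] (fun w => ((X i w ^+ 2)%R)%:E).
  move=> i; apply/measurable_EFinP; apply: measurable_funX.
  exact: measurable_funPT.
apply: (@le_lt_trans _ _ (\int[P]_w (C%:E * \sum_(i <- J) ((X i w ^+ 2)%R)%:E))).
  apply: ge0_le_integral => //.
  - by move=> w _; rewrite lee_fin hp_ge0.
  - by apply/measurable_EFinP; exact: mhpY.
  - apply: emeasurable_funM => //.
    exact: emeasurable_sum.
  - move=> w _; rewrite sumEFin -EFinM lee_fin /J !big_cons big_nil addr0.
    apply: le_trans (hp_le Pw0 N00 (Yv X a b w)) _.
    by rewrite /Yv /= !addrA.
rewrite ge0_integralZl //.
all: try (by move=> w _; apply: sume_ge0 => i _; rewrite lee_fin sqr_ge0).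
all: try (by rewrite lee_fin).
all: try exact: emeasurable_sum.
rewrite ge0_integral_sum //.
all: try (by move=> i w _; rewrite lee_fin sqr_ge0).
apply: lte_mul_pinfty => //.
rewrite big_seq; apply: lte_sum_pinfty => i.
by rewrite /J !inE => /or4P[] /eqP ->; apply: rv_moment2.
Qed.

End main.

Lemma sume_const_seq (R : realType) (I : eqType) (S : seq I) (F : I -> \bar R) (x : \bar R) :
  (forall p, p \in S -> F p = x) -> (\sum_(p <- S) F p = x *+ size S)%E.
Proof.
elim: S => [|p S IH] H; first by rewrite big_nil.
rewrite big_cons (H p (mem_head _ _)) IH; first by rewrite -mulrS.
by move=> q qS; apply: H; rewrite inE qS orbT.
Qed.

Definition good (L : nat) (p : nat * nat) : Prop :=
  [/\ p.1 != p.2, (1 <= p.1 <= L)%N & (1 <= p.2 <= L)%N].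

Section scheme.
Context (d : measure_display) (T : measurableType d) (R : realType)
  (P : probability T R) (L : nat) (X : nat * bool -> {RV P >-> R})
  (Pw N0 sigma2 : R).
Hypothesis HG : equal_gain_rayleigh L X sigma2.
Hypotheses (Pw0 : 0 < Pw) (N00 : 0 < N0) (s0 : 0 < sigma2) (L2 : (2 <= L)%N).
Local Open Scope ereal_scope.

Definition alpha := \int[P]_w (hp Pw N0 (Yv X 1 2 w))%:E.
Definition beta := \int[P]_w (hn Pw N0 (Yv X 1 2 w))%:E.
Definition cst_c : R := (2 * (L%:R - 1))^-1.

Lemma good12 : good L (1, 2)%N.
Proof. by split => //=; rewrite ?(leq_trans _ L2) // L2. Qed.

Lemma hp_transfer p : good L p ->
  \int[P]_w (hp Pw N0 (Yv X p.1 p.2 w))%:E = alpha.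
Proof.
case=> ab aL bL; case: good12 => ab' aL' bL'.
apply: (@integral_transfer _ _ _ _ _ _ _ HG _ _ _ _ (fun y => (hp Pw N0 y)%:E) ab aL bL ab' aL' bL').
- by apply/measurable_EFinP; exact: mhp.
- by move=> y; rewrite lee_fin hp_ge0.
Qed.

Lemma hn_transfer p : good L p ->
  \int[P]_w (hn Pw N0 (Yv X p.1 p.2 w))%:E = beta.
Proof.
case=> ab aL bL; case: good12 => ab' aL' bL'.
apply: (@integral_transfer _ _ _ _ _ _ _ HG _ _ _ _ (fun y => (hn Pw N0 y)%:E) ab aL bL ab' aL' bL').
- by apply/measurable_EFinP; exact: mhn.
- by move=> y; rewrite lee_fin hn_ge0.
Qed.

Lemma c_gt0 : (0 < cst_c)%R.
Proof.
rewrite /cst_c invr_gt0 mulr_gt0 // subr_gt0.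
by rewrite (@ltr_nat R 1 L).
Qed.

Lemma alpha_fin : alpha < +oo.
Proof. by case: good12 => _ aL bL; exact: (hp_fin HG). Qed.

Lemma int_sum_hp (S : seq (nat * nat)) : (forall p, p \in S -> good L p) ->
  \int[P]_w ((cst_c * \sum_(p <- S) hp Pw N0 (Yv X p.1 p.2 w))%R)%:E =
  cst_c%:E * (alpha *+ size S).
Proof.
move=> HS.
under eq_integral do rewrite EFinM -sumEFin.
rewrite ge0_integralZl //.
all: try (by move=> w _; apply: sume_ge0 => i _; rewrite lee_fin hp_ge0).
all: try (by rewrite lee_fin ltW // c_gt0).
all: try (apply: emeasurable_sum => i; apply/measurable_EFinP; exact: mhpY).
rewrite ge0_integral_sum //.
all: try (by move=> i w _; rewrite lee_fin hp_ge0).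
all: try (move=> i; apply/measurable_EFinP; exact: mhpY).
congr (_ * _); apply: sume_const_seq => p pS.
exact: hp_transfer (HS p pS).
Qed.

Lemma int_sum_hn (S : seq (nat * nat)) : (forall p, p \in S -> good L p) ->
  \int[P]_w ((cst_c * \sum_(p <- S) hn Pw N0 (Yv X p.1 p.2 w))%R)%:E =
  cst_c%:E * (beta *+ size S).
Proof.
move=> HS.
under eq_integral do rewrite EFinM -sumEFin.
rewrite ge0_integralZl //.
all: try (by move=> w _; apply: sume_ge0 => i _; rewrite lee_fin hn_ge0).
all: try (by rewrite lee_fin ltW // c_gt0).
all: try (apply: emeasurable_sum => i; apply/measurable_EFinP; exact: mhnY).
rewrite ge0_integral_sum //.
all: try (by move=> i w _; rewrite lee_fin hn_ge0).
all: try (move=> i; apply/measurable_EFinP; exact: mhnY).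
congr (_ * _); apply: sume_const_seq => p pS.
exact: hn_transfer (HS p pS).
Qed.

Lemma scheme_value (S : seq (nat * nat)) : (forall p, p \in S -> good L p) ->
  avg_sum_rate X L Pw N0 S =
  cst_c%:E * (alpha *+ size S) - cst_c%:E * (beta *+ size S).
Proof.
move=> HS; rewrite /avg_sum_rate.
have e w : sum_rate L Pw N0 (fun j => gain X j w) S =
    (cst_c * \sum_(p <- S) hp Pw N0 (Yv X p.1 p.2 w) -
     cst_c * \sum_(p <- S) hn Pw N0 (Yv X p.1 p.2 w))%R.
  rewrite /sum_rate -mulrBr -sumrB; congr (_ * _)%R.
  by apply: eq_bigr => p _; exact: (hrE Pw N0 (Yv X p.1 p.2 w)).
under eq_integral do rewrite e.
rewrite integralB_nonneg.
- by rewrite int_sum_hp // int_sum_hn.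
- apply: measurable_funM => //; apply: measurable_sum => p; exact: mhpY.
- apply: measurable_funM => //; apply: measurable_sum => p; exact: mhnY.
- move=> w; apply: mulr_ge0; first exact: ltW c_gt0.
  by apply: sumr_ge0 => p _; exact: hp_ge0.
- move=> w; apply: mulr_ge0; first exact: ltW c_gt0.
  by apply: sumr_ge0 => p _; exact: hn_ge0.
- rewrite int_sum_hp //; apply: lte_mul_pinfty => //.
    by rewrite lee_fin ltW // c_gt0.
  have a0 : 0 <= alpha by apply: integral_ge0 => w _; rewrite lee_fin hp_ge0.
  have af : alpha \is a fin_num by rewrite ge0_fin_numE // alpha_fin.
  by rewrite -(fineK af) -EFin_natmul ltry.
Qed.

End scheme.

From mathcomp Require Import zify.

Lemma goodA (L : nat) p : p \in pairs_A L -> good L p.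
Proof.
case/mapP => t; rewrite mem_iota => /andP[t1 tL] ->.
split => /=; lia.
Qed.

Lemma goodB (L : nat) p : p \in pairs_B L -> good L p.
Proof.
case/mapP => t; rewrite mem_iota => /andP[t1 tL] ->.
by case: ifP => h; split => /=; lia.
Qed.

Lemma goodP (L i : nat) p : (1 <= i <= L)%N -> p \in pairs_proposed L i -> good L p.
Proof.
move=> iL; case/mapP => j; rewrite mem_filter mem_iota => /andP[ji /andP[j1 jL]] ->.
by split => /=; lia.
Qed.

Lemma size_A L : size (pairs_A L) = (L - 1)%N.
Proof. by rewrite size_map size_iota. Qed.

Lemma size_B L : size (pairs_B L) = (L - 1)%N.
Proof. by rewrite size_map size_iota. Qed.

Lemma size_P L i : (1 <= i <= L)%N -> size (pairs_proposed L i) = (L - 1)%N.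
Proof.
move=> iL; rewrite size_map size_filter.
have := count_predC (pred1 i) (iota 1 L).
rewrite count_uniq_mem ?iota_uniq // mem_iota size_iota.
have -> : (1 <= i < 1 + L)%N by lia.
move=> /= h.
have -> : count (fun j => j != i) (iota 1 L) = count (predC (pred1 i)) (iota 1 L).
  by apply: eq_count.
by rewrite -{2}h addnC addnK.
Qed.

Local Close Scope classical_set_scope.
Unset Implicit Arguments.

Theorem proposition4 (d : measure_display) (T : measurableType d)
    (R : realType) (P : probability T R) (L : nat)
    (X : nat * bool -> {RV P >-> R}) (Pw Pr N0 sigma2 : R) :
  (2 <= L)%N -> 0 < Pw -> 0 < Pr -> 0 < N0 -> 0 < sigma2 ->
  equal_gain_rayleigh L X sigma2 ->
  avg_sum_rate_proposed X L Pw N0 = avg_sum_rate X L Pw N0 (pairs_A L) /\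
  avg_sum_rate_proposed X L Pw N0 = avg_sum_rate X L Pw N0 (pairs_B L).
Proof.
move=> L2 Pw0 Pr0 N00 s0 HG.
have hA := scheme_value HG Pw0 N00 s0 L2 (@goodA L).
have hB := scheme_value HG Pw0 N00 s0 L2 (@goodB L).
rewrite size_A in hA; rewrite size_B in hB.
rewrite hA hB.
suff -> : avg_sum_rate_proposed X L Pw N0 = avg_sum_rate X L Pw N0 (pairs_A L).
  by rewrite hA.
rewrite hA /avg_sum_rate_proposed.
set V := (_ - _)%E.
have hP : forall i, (1 <= i < L.+1)%N -> avg_sum_rate X L Pw N0 (pairs_proposed L i) = V.
  move=> i iL; have iL' : (1 <= i <= L)%N by rewrite -ltnS.
  rewrite (scheme_value HG Pw0 N00 s0 L2 (fun p Hp => goodP iL' Hp)).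
  by rewrite size_P.
rewrite (eq_big_nat _ _ hP) sumr_const_nat subSS subn0.
rewrite -[(V *+ L)%R](mule_natl V L) muleA -EFinM mulVf ?mul1e //.
by rewrite pnatr_eq0 -lt0n (leq_trans _ L2).
Qed.
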